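(* Assume $\theta_i<1$ for all $i$ and $\theta_j>0$ for some $j$. Suppose $\mathcal G(C)$ is a star topology with center node $l$ and $0<\theta_l<1$. Let $x^*$ be any equilibrium social power of systems (A) and (B). Then: (i) for any $i,j\in\mathcal V_f$, if $C_{li}>C_{lj}$ then $x^*_i>x^*_j$; (ii) for any $i\in\mathcal V_f$ and $j\in\mathcal V_p\setminus\{l\}$, if $C_{li}=C_{lj}$ then $x^*_i>x^*_j$; (iii) for any $i,j\in\mathcal V_p\setminus\{l\}$ with $C_{li}=C_{lj}$, $x^*_i>x^*_j$ if and only if $\theta_i<\theta_j$; (iv) for any $i,j\in\mathcal V_p\setminus\{l\}$ with $\theta_i=\theta_j$, $x^*_i>x^*_j$ if and only if $C_{li}>C_{lj}$.
   Context: Let $n\ge 2$, $\mathbf 1_n$ the all-ones vector, $I_n$ the identity matrix, $\Delta_n=\{x\in\mathbb R^n: x\ge 0,\ \mathbf 1_n^Tx=1\}$. Let $C\in\mathbb R^{n\times n}$ be a nonnegative row-stochastic matrix with zero diagonal, and $\mathcal G(C)$ the digraph on $\{1,\dots,n\}$ with an edge $(i,j)$ iff $C_{ij}>0$. $\mathcal G(C)$ is a star topology with center node $l$ if every edge of $\mathcal G(C)$ is either from $l$ or to $l$ (i.e. $C_{ij}>0$ implies $i=l$ or $j=l$). Let $\theta=(\theta_1,\dots,\theta_n)\in[0,1]^n$, $\Theta=\mathrm{diag}(\theta)$, $W(x)=\mathrm{diag}(x)+(I_n-\mathrm{diag}(x))C$. Let $\mathcal V_f=\{i:\theta_i=0\}$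 and $\mathcal V_p=\{i:\theta_i>0\}$. System (A): $x(s+1)=F(x(s))$, $x(0)\in\Delta_n$, where $F(x)=(I_n-\Theta)(I_n-W(x)^T\Theta)^{-1}\mathbf 1_n/n$; an equilibrium is $x^*\in\Delta_n$ with $F(x^* )=x^*$. System (B): $V(k+1)=\Theta W(x(k))V(k)+I_n-\Theta$, $x(k+1)=V(k+1)^T\mathbf 1_n/n$, with $V(0)=I_n$, $x(0)\in\Delta_n$; an equilibrium is a pair $(V^*,x^* )$ with $V^*$ row-stochastic, $x^*\in\Delta_n$, $V^*=\Theta W(x^* )V^*+I_n-\Theta$, $x^*=(V^* )^T\mathbf 1_n/n$. The equilibrium social powers of (A) and (B) coincide (the fixed points of $F$). *)

(* Defs.v *)
(* R is an arbitrary real field (statement is purely algebraic/order-theoretic). *)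
From HB Require Import structures.
From mathcomp Require Import all_boot all_order all_algebra.
Set Implicit Arguments. Unset Strict Implicit. Unset Printing Implicit Defensive.
Import Order.TTheory GRing.Theory Num.Theory.
Local Open Scope ring_scope.

Definition row_stochastic (R : numDomainType) (n : nat) (C : 'M[R]_n) : Prop :=
  (forall i j, 0 <= C i j) /\ (forall i, \sum_(j < n) C i j = 1).

Definition zero_diag (R : numDomainType) (n : nat) (C : 'M[R]_n) : Prop :=
  forall i, C i i = 0.

(* G(C) has edge (i,j) iff C_ij > 0; star with center l *)
Definition star_topology (R : numDomainType) (n : nat) (C : 'M[R]_n) (l : 'I_n) : Prop :=
  forall i j, 0 < C i j -> i = l \/ j = l.

Definition in_simplex (R : numDomainType) (n : nat) (x : 'cV[R]_n) : Prop :=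
  (forall i, 0 <= x i 0) /\ \sum_(i < n) x i 0 = 1.

Definition Theta (R : numDomainType) (n : nat) (theta : 'I_n -> R) : 'M[R]_n :=
  diag_mx (\row_i theta i).

Definition Wmx (R : numDomainType) (n : nat) (C : 'M[R]_n) (x : 'cV[R]_n) : 'M[R]_n :=
  diag_mx (x^T) + (1%:M - diag_mx (x^T)) *m C.

Definition Fmap (R : numFieldType) (n : nat) (C : 'M[R]_n) (theta : 'I_n -> R)
  (x : 'cV[R]_n) : 'cV[R]_n :=
  (1%:M - Theta theta) *m invmx (1%:M - (Wmx C x)^T *m Theta theta)
    *m const_mx (n%:R^-1).

(* equilibrium social power of (A) (equivalently of (B)) *)
Definition equilibrium (R : numFieldType) (n : nat) (C : 'M[R]_n) (theta : 'I_n -> R)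
  (x : 'cV[R]_n) : Prop :=
  in_simplex x /\ Fmap C theta x = x.

(* Main.v *)
Require Import Defs.
From HB Require Import structures.
From mathcomp Require Import all_boot all_order all_algebra.
From mathcomp Require Import ring lra.
Import Order.TTheory GRing.Theory Num.Theory.
Local Open Scope ring_scope.


Lemma Wentry (R : numFieldType) n (C : 'M[R]_n) (x : 'cV[R]_n) j i :
  Wmx C x j i = x j 0 *+ (j == i) + (1 - x j 0) * C j i.
Proof.
rewrite /Wmx mxE [diag_mx _ j i]mxE mxE; congr (_ + _).
rewrite -diag_const_mx -linearB /= mul_diag_mx !mxE.
done.
Qed.

Lemma Mentry (R : numFieldType) n (C : 'M[R]_n) (x : 'cV[R]_n) theta i j :
  (1%:M - (Wmx C x)^T *m Theta theta) i j = (i == j)%:R - Wmx C x j i * theta j.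
Proof. by rewrite /Theta mul_mx_diag !mxE. Qed.

Lemma Wrow (R : numFieldType) n (C : 'M[R]_n) (x : 'cV[R]_n) k :
  (forall i, \sum_(j < n) C i j = 1) -> \sum_j Wmx C x k j = 1.
Proof.
move=> hC; under eq_bigr do rewrite Wentry.
rewrite big_split /= -mulr_sumr hC mulr1 (bigD1 k) //= eqxx big1 ?addr0.
  by rewrite mulr1n addrC subrK.
by move=> j /negPf; rewrite eq_sym => ->.
Qed.

Lemma Wge0 (R : numFieldType) n (C : 'M[R]_n) (x : 'cV[R]_n) k j :
  (forall i, 0 <= x i 0 <= 1) -> (forall i j, 0 <= C i j) -> 0 <= Wmx C x k j.
Proof.
move=> hx hC; rewrite Wentry; have /andP[h0 h1] := hx k.
apply: addr_ge0; first exact: mulrn_wge0.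
by apply: mulr_ge0 => //; rewrite subr_ge0.
Qed.


Lemma ker_trivial (R : realFieldType) n (W : 'M[R]_n) theta (u : 'I_n -> R) :
  (forall k j, 0 <= W k j) -> (forall k, \sum_j W k j = 1) ->
  (forall k, 0 <= theta k) -> (forall k, theta k < 1) ->
  (forall j, u j = \sum_k W k j * theta k * u k) -> forall k, u k = 0.
Proof.
move=> W0 W1 t0 t1 hu.
have hle : forall j, `|u j| <= \sum_k W k j * theta k * `|u k|.
  move=> j; rewrite hu; apply: le_trans (ler_norm_sum _ _ _) _.
  apply: ler_sum => k _; rewrite !normrM (ger0_norm (W0 k j)) (ger0_norm (t0 k)). done.
have hs : \sum_j `|u j| <= \sum_k theta k * `|u k|.
  apply: le_trans (ler_sum _ (fun j _ => hle j)) _.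
  rewrite exchange_big /=; apply: ler_sum => k _.
  by rewrite -mulr_suml -mulr_suml W1 mul1r.
have hz : \sum_k (1 - theta k) * `|u k| == 0.
  rewrite eq_le; apply/andP; split.
    rewrite -subr_ge0 in hs.
    rewrite -oppr_ge0 -sumrN; apply: le_trans hs _; rewrite -sumrB.
    by apply: ler_sum => k _; rewrite mulrBl mul1r opprB.
  by apply: sumr_ge0 => k _; apply: mulr_ge0 => //; rewrite subr_ge0; exact: ltW.
move=> k; move: hz; rewrite psumr_eq0 => [/allP/(_ k (mem_index_enum k))|].
  rewrite /= mulf_eq0 normr_eq0 subr_eq0 => /orP[/eqP h|/eqP //].
  by have := t1 k; rewrite -h ltxx.
by move=> i _; apply: mulr_ge0 => //; rewrite subr_ge0; exact: ltW.
Qed.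

Lemma M_unit (R : realFieldType) n (C : 'M[R]_n) (x : 'cV[R]_n) theta :
  (forall k j, 0 <= Wmx C x k j) -> (forall k, \sum_j Wmx C x k j = 1) ->
  (forall k, 0 <= theta k) -> (forall k, theta k < 1) ->
  (1%:M - (Wmx C x)^T *m Theta theta) \in unitmx.
Proof.
move=> W0 W1 t0 t1.
set M := (1%:M - _).
rewrite -unitmx_tr -row_free_unit -kermx_eq0; apply/eqP/matrixP => r k.
rewrite [RHS]mxE.
have hK := mulmx_ker M^T.
apply: (@ker_trivial R n (Wmx C x) theta (fun k => kermx M^T r k) W0 W1 t0 t1) => j.
move/matrixP/(_ r j): hK => h.
rewrite mxE [RHS]mxE in h.
rewrite (eq_bigr (fun i => kermx M^T r i * (j == i)%:R - kermx M^T r i * (Wmx C x i j * theta i))) in h; last first.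
  by move=> i _; rewrite [M^T i j]mxE /M Mentry mulrBr.
move: h; rewrite sumrB (bigD1 j) //= eqxx mulr1 big1 ?addr0; last first.
  by move=> i /negPf; rewrite eq_sym => ->; rewrite mulr0.
move/eqP; rewrite subr_eq0 => /eqP ->; apply: eq_bigr => i _; ring.
Qed.


Lemma alg_iii (R : realFieldType) (xi xj ti tj a : R) :
 0 < xi -> 0 < xj -> xi + xj <= 1 -> 0 <= ti -> ti < 1 -> 0 <= tj -> tj < 1 ->
 xi - ti * xi^+2 = (1-ti)*a -> xj - tj * xj^+2 = (1-tj)*a -> (xj < xi <-> ti < tj).
Proof.
move=> xi0 xj0 s1 ti0 ti1 tj0 tj1 ei ej.
have xi1 : xi < 1 by lra.
have xj1 : xj < 1 by lra.
have hi : ti * (a - xi^+2) = a - xi.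
  apply/eqP; rewrite -subr_eq0; apply/eqP; move: ei; rewrite !expr2 => ei; nra.
have hj : tj * (a - xj^+2) = a - xj.
  apply/eqP; rewrite -subr_eq0; apply/eqP; move: ej; rewrite !expr2 => ej; nra.
have ha : 0 < a.
  have : 0 < xi - ti * xi^+2 by rewrite expr2; nra.
  rewrite ei; nra.
have pi : 0 < a - xi^+2.
  rewrite ltNge; apply/negP => h.
  have : xi - ti * xi^+2 <= (1 - ti) * xi^+2 by rewrite ei; nra.
  rewrite expr2; nra.
have pj : 0 < a - xj^+2.
  rewrite ltNge; apply/negP => h.
  have : xj - tj * xj^+2 <= (1 - tj) * xj^+2 by rewrite ej; nra.
  rewrite expr2; nra.
have hid : (tj - ti) * ((a - xi^+2) * (a - xj^+2)) = (xj - xi) * (a * (xi + xj - 1) - xi * xj).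
  have -> : (tj - ti) * ((a - xi^+2) * (a - xj^+2)) =
     (tj * (a - xj^+2)) * (a - xi^+2) - (ti * (a - xi^+2)) * (a - xj^+2) by ring.
  rewrite hi hj; ring.
have hQ : a * (xi + xj - 1) - xi * xj < 0 by nra.
have hP : 0 < (a - xi^+2) * (a - xj^+2) by apply: mulr_gt0.
split => h.
  have : 0 < (tj - ti) * ((a - xi^+2) * (a - xj^+2)) by rewrite hid; nra.
  by rewrite pmulr_lgt0 // subr_gt0.
have : 0 < (xj - xi) * (a * (xi + xj - 1) - xi * xj).
  by rewrite -hid; apply: mulr_gt0 => //; rewrite subr_gt0.
by rewrite nmulr_lgt0 // subr_lt0.
Qed.

Lemma alg_iv (R : realFieldType) (xi xj s c K Ci Cj : R) :
 0 < xi -> 0 < xj -> xi + xj <= 1 -> 0 <= s -> s < 1 -> 0 < K ->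
 xi - s * xi^+2 = (1-s)*(c + Ci * K) -> xj - s * xj^+2 = (1-s)*(c + Cj * K) ->
 (xj < xi <-> Cj < Ci).
Proof.
move=> xi0 xj0 s1 s0 s1' K0 ei ej.
have hid : (xi - xj) * (1 - s * (xi + xj)) = (1 - s) * K * (Ci - Cj).
  have -> : (xi - xj) * (1 - s * (xi + xj)) = (xi - s * xi^+2) - (xj - s * xj^+2) by ring.
  rewrite ei ej; ring.
have hp : 0 < 1 - s * (xi + xj) by nra.
have hq : 0 < (1 - s) * K by apply: mulr_gt0 => //; rewrite subr_gt0.
split => h.
  have : 0 < (1 - s) * K * (Ci - Cj) by rewrite -hid; apply: mulr_gt0 => //; rewrite subr_gt0.
  by rewrite pmulr_rgt0 // subr_gt0.
have : 0 < (xi - xj) * (1 - s * (xi + xj)) by rewrite hid; apply: mulr_gt0 => //; rewrite subr_gt0.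
by rewrite pmulr_lgt0 // subr_gt0.
Qed.


Theorem corollary3 (R : realFieldType) (n : nat) (hn : (2 <= n)%N)
  (C : 'M[R]_n) (theta : 'I_n -> R) (l : 'I_n) (xs : 'cV[R]_n) :
  row_stochastic C -> zero_diag C ->
  (forall i, 0 <= theta i) ->
  (forall i, theta i < 1) ->
  (exists j, 0 < theta j) ->
  star_topology C l ->
  0 < theta l -> theta l < 1 ->
  equilibrium C theta xs ->
  (* (i) *)
  (forall i j, theta i = 0 -> theta j = 0 ->
     C l j < C l i -> xs j 0 < xs i 0) /\
  (* (ii) *)
  (forall i j, theta i = 0 -> 0 < theta j -> j != l ->
     C l i = C l j -> xs j 0 < xs i 0) /\
  (* (iii) *)
  (forall i j, 0 < theta i -> i != l -> 0 < theta j -> j != l ->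
     C l i = C l j -> (xs j 0 < xs i 0 <-> theta i < theta j)) /\
  (* (iv) *)
  (forall i j, 0 < theta i -> i != l -> 0 < theta j -> j != l ->
     theta i = theta j -> (xs j 0 < xs i 0 <-> C l j < C l i)).
Proof.
move=> [C0 C1] Cd t0 t1 _ star tl0 tl1 [[x0 x1] hF].
have xle1 : forall i, xs i 0 <= 1.
  move=> i; rewrite -x1 (bigD1 i) //= lerDl; exact: sumr_ge0.
have xpair : forall i j, i != j -> xs i 0 + xs j 0 <= 1.
  move=> i j hij; rewrite -x1 (bigD1 i) //= (bigD1 j) /=; last by rewrite eq_sym.
  by rewrite addrA lerDl; apply: sumr_ge0.
have hW0 : forall k j, 0 <= Wmx C xs k j.
  by move=> k j; apply: (@Wge0 R n C xs k j) => // i; rewrite x0 xle1.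
have hW1 : forall k, \sum_j Wmx C xs k j = 1 by move=> k; exact: (@Wrow R n C xs k C1).
have hU := @M_unit R n C xs theta hW0 hW1 t0 t1.
set M := 1%:M - _ in hU.
pose y : 'cV[R]_n := invmx M *m const_mx (n%:R^-1 : R).
have hy : M *m y = const_mx (n%:R^-1 : R) by rewrite /y mulKVmx.
have hx : forall i, xs i 0 = (1 - theta i) * y i 0.
  move=> i; move: hF; rewrite /Fmap -/M -mulmxA -/y => /matrixP/(_ i 0) <-.
  rewrite mulmxBl mul1mx /Theta mul_diag_mx !mxE; ring.
have heq : forall i, y i 0 = n%:R^-1 + \sum_j Wmx C xs j i * theta j * y j 0.
  move=> i; move/matrixP/(_ i 0): hy; rewrite [RHS]mxE mxE => h.
  rewrite (eq_bigr (fun j => (i == j)%:R * y j 0 - Wmx C xs j i * theta j * y j 0)) in h; last first.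
    by move=> j _; rewrite /M Mentry mulrBl.
  move: h; rewrite sumrB (bigD1 i) //= eqxx mul1r big1 ?addr0 => [h|j /negPf]; last first.
    by rewrite eq_sym => ->; rewrite mul0r.
  by rewrite -h; ring.
have hn0 : 0 < (n%:R^-1 : R) by rewrite invr_gt0 ltr0n; apply: leq_trans hn.
have hy0 : forall i, 0 <= y i 0.
  move=> i; have := x0 i; rewrite hx pmulr_rge0 // subr_gt0; exact: t1.
have hyn : forall i, n%:R^-1 <= y i 0.
  move=> i; rewrite heq lerDl; apply: sumr_ge0 => j _.
  by apply: mulr_ge0 => //; apply: mulr_ge0.
have hxpos : forall i, 0 < xs i 0.
  move=> i; rewrite hx; apply: mulr_gt0; first by rewrite subr_gt0.
  exact: lt_le_trans hn0 (hyn i).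
have hxl : xs l 0 < 1.
  have [i hil] : exists i : 'I_n, i != l.
    have h0 : (0 < n)%N by apply: leq_trans hn.
    case: (eqVneq (Ordinal h0) l) => [e|ne]; last by exists (Ordinal h0).
    exists (Ordinal hn); apply/eqP => e'; move: e; rewrite -e' => /(congr1 val) //=.
  have := xpair _ _ hil; have := hxpos i; lra.
pose K := (1 - xs l 0) * theta l * y l 0.
have hK : 0 < K.
  apply: mulr_gt0; first by apply: mulr_gt0 => //; rewrite subr_gt0.
  exact: lt_le_trans hn0 (hyn l).
have Cz : forall j i, j != l -> i != l -> C j i = 0.
  move=> j i hj hi; have := C0 j i; rewrite le_eqVlt => /orP[/eqP <- //|/star].
  by case=> /eqP; rewrite ?(negPf hj) ?(negPf hi).
have key : forall i, i != l ->
    xs i 0 - theta i * xs i 0 ^+ 2 = (1 - theta i) * (n%:R^-1 + C l i * K).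
  move=> i hi; have e := heq i.
  rewrite (bigD1 i) //= (bigD1 l) /= in e; last by rewrite eq_sym.
  rewrite big1 ?addr0 in e; last first.
    move=> j /andP[hji hjl]; rewrite Wentry (negPf hji) mulr0n add0r Cz //; ring.
  rewrite !Wentry eqxx eq_sym (negPf hi) mulr0n add0r Cd mulr0 addr0 mulr1n in e.
  have e' : y i 0 - theta i * (1 - theta i) * y i 0 ^+ 2 = n%:R^-1 + C l i * K.
    rewrite {1}e /K (hx i); ring.
  rewrite hx; transitivity ((1 - theta i) * (y i 0 - theta i * (1 - theta i) * y i 0 ^+ 2)).
    ring.
  by rewrite e'.
have nl : forall i, theta i = 0 -> i != l.
  by move=> i h; apply/eqP => e; move: tl0; rewrite -e h ltxx.
split.
  move=> i j hi hj hC.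
  have ei := key i (nl i hi); have ej := key j (nl j hj).
  rewrite hi subr0 mul0r subr0 mul1r in ei; rewrite hj subr0 mul0r subr0 mul1r in ej.
  by rewrite ei ej ltrD2l ltr_pM2r.
split.
  move=> i j hi hj hjl hC.
  have hij : i != j by apply/eqP => e; move: hj; rewrite -e hi ltxx.
  have ei := key i (nl i hi); have ej := key j hjl; rewrite -hC in ej.
  rewrite (@alg_iii R _ _ _ _ _ (hxpos i) (hxpos j) (xpair _ _ hij) (t0 i) (t1 i) (t0 j) (t1 j) ei ej).
  by rewrite hi.
split.
  move=> i j hi hil hj hjl hC.
  case: (eqVneq i j) => [<-|hij]; first by rewrite !ltxx.
  have ei := key i hil; have ej := key j hjl; rewrite -hC in ej.
  exact: (@alg_iii R _ _ _ _ _ (hxpos i) (hxpos j) (xpair _ _ hij) (t0 i) (t1 i) (t0 j) (t1 j) ei ej).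
move=> i j hi hil hj hjl ht.
case: (eqVneq i j) => [<-|hij]; first by rewrite !ltxx.
have ei := key i hil; have ej := key j hjl; rewrite -ht in ej.
exact: (@alg_iv R _ _ _ _ _ _ _ (hxpos i) (hxpos j) (xpair _ _ hij) (t0 i) (t1 i) hK ei ej).
Qed.
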